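(* Let $\gamma\in\Gamma$, $d=e_1+\varepsilon\gamma$, with orientations chosen so that $Vd\ge0$ for small $\varepsilon\ge0$. If $i\in\{1,\dots,m\}$ satisfies $(Ve_1)_i>0$, then for all $\varepsilon>0$ sufficiently small, $$\big(Vg^*(d)\big)_i<(1+\lambda)(Vd)_i.$$
   Context: $\mathcal G$ is a simple connected oriented graph with nodes $\{1,\dots,n\}$, $m$ edges, incidence matrix $C$, PTDF matrix $V=C(C^TC)^+$; $e$ all-ones; $\lambda\in(0,1)$. $\Gamma=\{\gamma\in\mathbb R^n:\gamma_1=0,\gamma\ge0,e^T\gamma=1\}$. $g^*(d)$ is the unique minimizer of $\frac12\sum_ig_i^2$ over $g\in\mathbb R^n_{\ge0}$ with $e^Tg=e^Td$ and $-\lambda|Vd|\le V(d-g)\le\lambda|Vd|$. *)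

(* Defs.v *)
From HB Require Import structures.
From mathcomp Require Import all_boot all_order all_algebra.
From mathcomp Require Import reals.
Set Implicit Arguments. Unset Strict Implicit. Unset Printing Implicit Defensive.
Import Order.TTheory GRing.Theory Num.Theory.
Local Open Scope ring_scope.

Definition simple_graph (N m : nat) (src dst : 'I_m -> 'I_N) : Prop :=
  (forall k, src k != dst k) /\
  (forall k l, k != l -> [set src k; dst k] != [set src l; dst l]).

Definition adj (N m : nat) (src dst : 'I_m -> 'I_N) : rel 'I_N :=
  fun a b => [exists k, ((src k == a) && (dst k == b)) || ((src k == b) && (dst k == a))].

Definition connected_graph (N m : nat) (src dst : 'I_m -> 'I_N) : Prop :=
  forall a b, connect (adj src dst) a b.

Definition incidence (R : ringType) (N m : nat) (src dst : 'I_m -> 'I_N)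
  : 'M[R]_(m, N) :=
  \matrix_(k, j) ((j == src k)%:R - (j == dst k)%:R).

Definition is_pinv (R : ringType) (p q : nat) (A : 'M[R]_(p, q)) (X : 'M[R]_(q, p))
  : Prop :=
  [/\ A *m X *m A = A, X *m A *m X = X, (A *m X)^T = A *m X & (X *m A)^T = X *m A].

Definition absv (R : numDomainType) (p : nat) (v : 'cV[R]_p) : 'cV[R]_p :=
  map_mx (fun x => `|x|) v.

Definition esum (R : ringType) (p : nat) (v : 'cV[R]_p) : R := \sum_j v j 0.

Definition feasible (R : realFieldType) (N m : nat) (V : 'M[R]_(m, N))
  (lambda : R) (d g : 'cV[R]_N) : Prop :=
  [/\ (forall j, 0 <= g j 0), esum g = esum d &
      forall k, - (lambda * absv (V *m d) k 0) <= (V *m (d - g)) k 0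
                /\ (V *m (d - g)) k 0 <= lambda * absv (V *m d) k 0].

Definition objective (R : realFieldType) (N : nat) (g : 'cV[R]_N) : R :=
  2^-1 * \sum_j (g j 0) ^+ 2.

Definition is_gstar (R : realFieldType) (N m : nat) (V : 'M[R]_(m, N))
  (lambda : R) (d g : 'cV[R]_N) : Prop :=
  feasible V lambda d g /\
  forall h, feasible V lambda d h -> objective g <= objective h.

(* Gamma, with node 1 = ord0 *)
Definition in_Gamma (R : realFieldType) (n : nat) (gam : 'cV[R]_n.+1) : Prop :=
  [/\ gam ord0 0 = 0, (forall j, 0 <= gam j 0) & esum gam = 1].

Definition e1 (R : ringType) (n : nat) : 'cV[R]_n.+1 := delta_mx ord0 0.

(* Main.v *)
Require Import Defs.
From HB Require Import structures.
From mathcomp Require Import all_boot all_order all_algebra.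
From mathcomp Require Import reals.
From mathcomp Require Import ring lra.
Import Order.TTheory GRing.Theory Num.Theory.
Local Open Scope ring_scope.

Lemma sum_delta (R : ringType) (N : nat) (a : 'I_N) (x : 'I_N -> R) :
  \sum_j (j == a)%:R * x j = x a.
Proof.
rewrite (bigD1 a) //= eqxx mul1r big1 ?addr0 // => j /negbTE ->; by rewrite mul0r.
Qed.

Lemma incE {R : ringType} {N m} {src dst : 'I_m -> 'I_N} (x : 'cV[R]_N) k :
  (incidence R src dst *m x) k 0 = x (src k) 0 - x (dst k) 0.
Proof.
rewrite mxE.
under eq_bigr do rewrite mxE mulrBl.
by rewrite sumrB !sum_delta.
Qed.

Lemma incTE {R : ringType} {N m} {src dst : 'I_m -> 'I_N} (y : 'cV[R]_m) j :
  ((incidence R src dst)^T *m y) j 0 =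
  \sum_k ((j == src k)%:R - (j == dst k)%:R) * y k 0.
Proof. by rewrite mxE; apply: eq_bigr => k _; rewrite !mxE. Qed.

Lemma inc_ones {R : ringType} {N m} {src dst : 'I_m -> 'I_N} :
  incidence R src dst *m (const_mx 1 : 'cV[R]_N) = 0.
Proof. by apply/matrixP => k l; rewrite ord1 incE !mxE subrr. Qed.

Lemma ker_const {R : realFieldType} {N m} {src dst : 'I_m -> 'I_N}
  (Hconn : connected_graph src dst) (z : 'cV[R]_N) :
  ((incidence R src dst)^T *m incidence R src dst) *m z = 0 ->
  forall a b, z a 0 = z b 0.
Proof.
move=> Hz.
set C := incidence R src dst.
have H0 : (z^T *m (C^T *m C *m z)) 0 0 = \sum_k ((C *m z) k 0) ^+ 2.
  rewrite -(mulmxA C^T C z) (mulmxA z^T C^T) -trmx_mul mxE.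
  by apply: eq_bigr => k _; rewrite mxE expr2.
have Hk : forall k, (C *m z) k 0 = 0.
  move=> k; apply/eqP; rewrite -sqrf_eq0; apply/eqP.
  move: H0; rewrite Hz mulmx0 mxE => /esym /eqP.
  rewrite psumr_eq0 => [/allP Hall|i _]; last exact: sqr_ge0.
  by apply/eqP; apply: Hall; rewrite mem_index_enum.
move=> a b.
have Hcl : closed (adj src dst) [pred c | z c 0 == z a 0].
  move=> x y /existsP [k /orP [/andP [/eqP <- /eqP <-]|/andP [/eqP <- /eqP <-]]];
  rewrite !inE; have := Hk k; rewrite incE => /eqP; rewrite subr_eq0 => /eqP ->; by [].
have := closed_connect Hcl (Hconn a b).
by rewrite !inE eqxx => /esym /eqP.
Qed.

Lemma esumE (R : ringType) N (v : 'cV[R]_N) :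
  esum v = ((const_mx 1 : 'cV[R]_N)^T *m v) 0 0.
Proof. by rewrite /esum mxE; apply: eq_bigr => j _; rewrite !mxE mul1r. Qed.

Lemma LP_formula {R : realFieldType} {n m} {src dst : 'I_m -> 'I_n.+1}
  (Hconn : connected_graph src dst) (P : 'M[R]_n.+1)
  (HP : is_pinv ((incidence R src dst)^T *m incidence R src dst) P)
  (x : 'cV[R]_n.+1) :
  ((incidence R src dst)^T *m incidence R src dst) *m P *m x =
  x - (esum x / n.+1%:R) *: (const_mx 1 : 'cV[R]_n.+1).
Proof.
set C := incidence R src dst.
set L := C^T *m C.
set ones := (const_mx 1 : 'cV[R]_n.+1).
case: HP => H1 H2 H3 H4.
have Lsym : L^T = L by rewrite /L trmx_mul trmxK.
have Lones : L *m ones = 0 by rewrite /L -mulmxA inc_ones mulmx0.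
have LPones : L *m P *m ones = 0.
  by rewrite -H3 trmx_mul Lsym -mulmxA Lones mulmx0.
have esumLP : forall y, esum (L *m P *m y) = 0.
  move=> y; rewrite esumE mulmxA -[ones^T *m _]trmxK trmx_mul trmxK H3 LPones.
  by rewrite trmx0 mul0mx mxE.
have LLP : L *m (L *m P) = L.
  by rewrite -[LHS]trmxK trmx_mul H3 Lsym H1.
set z := x - L *m P *m x.
have Lz : L *m z = 0.
  by rewrite /z mulmxBr (mulmxA L (L *m P)) LLP subrr.
have Hc := ker_const Hconn _ Lz.
have esumB : forall u v : 'cV[R]_n.+1, esum (u - v) = esum u - esum v.
  by move=> u v; rewrite /esum -sumrB; apply: eq_bigr => j _; rewrite !mxE.
have ez : esum z = esum x by rewrite /z esumB esumLP subr0.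
have z0 : esum z = n.+1%:R * z ord0 0.
  rewrite /esum; under eq_bigr do rewrite (Hc _ ord0).
  by rewrite sumr_const card_ord mulr_natl.
have zE : z = (esum x / n.+1%:R) *: ones.
  apply/matrixP => a b; rewrite ord1 [RHS]mxE [ones a 0]mxE mulr1 (Hc a ord0) -ez z0 mulrC mulKf //.
  by rewrite pnatr_eq0.
by rewrite -zE /z opprB addrC subrK.
Qed.

Lemma P_ones {R : realFieldType} {n m} {src dst : 'I_m -> 'I_n.+1}
  (Hconn : connected_graph src dst) (P : 'M[R]_n.+1)
  (HP : is_pinv ((incidence R src dst)^T *m incidence R src dst) P) :
  P *m (const_mx 1 : 'cV[R]_n.+1) = 0.
Proof.
have HP' := HP; case: HP' => H1 H2 H3 H4.
have E := LP_formula Hconn _ HP (const_mx 1).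
have Es : esum (const_mx 1 : 'cV[R]_n.+1) = n.+1%:R.
  by rewrite /esum; under eq_bigr do rewrite mxE; rewrite sumr_const card_ord.
rewrite Es mulfV ?pnatr_eq0 // scale1r subrr in E.
transitivity (P *m ((incidence R src dst)^T *m incidence R src dst *m P *m (const_mx 1 : 'cV[R]_n.+1))).
  by rewrite mulmxA (mulmxA P _ P) H2.
by rewrite E mulmx0.
Qed.

Lemma esum_e1 (R : ringType) n : esum (e1 R n) = 1.
Proof.
rewrite /esum (bigD1 ord0) //= big1 ?addr0; first by rewrite mxE !eqxx.
by move=> j /negbTE Hj; rewrite mxE Hj.
Qed.

Lemma maxprin {R : realType} {n m} {src dst : 'I_m -> 'I_n.+1}
  (Hconn : connected_graph src dst) (P : 'M[R]_n.+1)
  (HP : is_pinv ((incidence R src dst)^T *m incidence R src dst) P) k :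
  dst k = ord0 -> (incidence R src dst *m (P *m e1 R n)) k 0 <= 0.
Proof.
move=> Hk.
set C := incidence R src dst.
set p := P *m e1 R n.
have E := LP_formula Hconn _ HP (e1 R n).
rewrite esum_e1 mul1r -mulmxA -mulmxA -/C -/p in E.
case: (@arg_maxP _ _ _ ord0 xpredT (fun j => p j 0) isT) => jm _ Hjm.
have Hjm' : forall j, p j 0 <= p jm 0 by move=> j; exact: Hjm.
have jm0 : jm = ord0.
  apply/eqP; apply/negPn/negP => Hne.
  move/matrixP: (E) => /(_ jm 0).
  rewrite incTE !mxE (negbTE Hne) /= add0r mulr1 => Hs.
  have : 0 <= \sum_k0 ((jm == src k0)%:R - (jm == dst k0)%:R) * (C *m p) k0 0.
    apply: sumr_ge0 => k0 _; rewrite incE.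
    case: (jm =P src k0) => [<-|_]; case: (jm =P dst k0) => [<-|_] /=;
    rewrite ?subrr ?mul0r // ?subr0 ?sub0r ?mul1r ?mulN1r ?subr_ge0 ?oppr_ge0 ?subr_le0 //.
  rewrite Hs oppr_ge0 => H.
  have : 0 < (n.+1%:R : R)^-1 by rewrite invr_gt0 ltr0n.
  by rewrite ltNge H.
rewrite -/C -/p incE Hk -jm0 subr_le0; exact: Hjm'.
Qed.

Lemma esum_lin (R : ringType) N (u v : 'cV[R]_N) c :
  esum (u + c *: v) = esum u + c * esum v.
Proof. by rewrite /esum mulr_sumr -big_split; apply: eq_bigr => j _; rewrite !mxE. Qed.

Lemma le_sum_one (R : realFieldType) N (f : 'I_N -> R) j :
  (forall k, 0 <= f k) -> f j <= \sum_k f k.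
Proof.
move=> H; rewrite (bigD1 j) //= lerDl; exact: sumr_ge0.
Qed.

Lemma mulBE (R : ringType) p q (A : 'M[R]_(p, q)) (x y : 'cV[R]_q) k :
  (A *m (x - y)) k 0 = (A *m x) k 0 - (A *m y) k 0.
Proof. by rewrite mulmxBr !mxE. Qed.

Theorem mainTheorem10 (R : realType) (n m : nat)
  (src dst : 'I_m -> 'I_n.+1)
  (Hsimple : simple_graph src dst) (Hconn : connected_graph src dst)
  (P : 'M[R]_n.+1)
  (HP : is_pinv ((incidence R src dst)^T *m incidence R src dst) P)
  (lambda : R) (Hl0 : 0 < lambda) (Hl1 : lambda < 1)
  (gam : 'cV[R]_n.+1) (Hgam : in_Gamma gam)
  (Horient : exists2 eps1 : R, 0 < eps1 &
     forall eps : R, 0 <= eps -> eps <= eps1 ->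
       forall k, 0 <= ((incidence R src dst *m P) *m (e1 R n + eps *: gam)) k 0)
  (i : 'I_m) (Hi : 0 < ((incidence R src dst *m P) *m e1 R n) i 0) :
  exists2 eps0 : R, 0 < eps0 &
    forall eps : R, 0 < eps -> eps < eps0 ->
      forall g : 'cV[R]_n.+1,
        is_gstar (incidence R src dst *m P) lambda (e1 R n + eps *: gam) g ->
        ((incidence R src dst *m P) *m g) i 0
          < (1 + lambda) * ((incidence R src dst *m P) *m (e1 R n + eps *: gam)) i 0.
Proof.
case: Horient => eps1 eps1_gt0 Hor.
case: Hgam => gam0 gam_ge0 gam_sum.
set C := incidence R src dst in Hor Hi *.
set V := C *m P in Hor Hi *.
set a := (V *m e1 R n) i 0 in Hi *.
set cg := (V *m gam) i 0.
set K1 := \sum_k `|(V *m gam) k 0|.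
set U := \sum_j (V i j) ^+ 2.
set K := 4 * K1 + 4.
set al := lambda * a / (U + 1).
have K1_ge0 : 0 <= K1 by apply: sumr_ge0 => k _; exact: normr_ge0.
have U_ge0 : 0 <= U by apply: sumr_ge0 => j _; exact: sqr_ge0.
have K_gt0 : 0 < K by rewrite /K; apply: ltr_wpDl; [apply: mulr_ge0 |] => //.
have al_gt0 : 0 < al by rewrite /al divr_gt0 ?mulr_gt0 //; lra.
have alE : al * (U + 1) = lambda * a by rewrite /al mulfVK //; apply: lt0r_neq0; lra.
have cg1 : 0 < `|cg| + 1 by have := normr_ge0 cg; lra.
exists (Num.min (Num.min 1 eps1) (Num.min (a / (2 * (`|cg| + 1))) (lambda * a * al / (K + 1)))).
  rewrite !lt_min; apply/andP; split; apply/andP; split => //.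
  - by rewrite divr_gt0 // mulr_gt0.
  - have h := mulr_gt0 (mulr_gt0 Hl0 Hi) al_gt0; apply: divr_gt0 => //; lra.
move=> eps eps_gt0; rewrite !lt_min => /andP [/andP [eps_lt1 eps_lt2] /andP [eps_lt3 eps_lt4]].
move=> g [[Hg0 Hgs Hgb] Hopt].
have eps_le1 : eps <= 1 by lra.
set d := e1 R n + eps *: gam in Hgb Hgs Hopt *.
have dE : d = e1 R n + eps *: gam by [].
clearbody d.
have Vd_lin : forall k, (V *m d) k 0 = (V *m e1 R n) k 0 + eps * (V *m gam) k 0.
  by move=> k; rewrite dE mulmxDr -scalemxAr !mxE.
have Vd0 : forall k, 0 <= (V *m d) k 0.
  by move=> k; rewrite dE; apply: Hor; lra.
have absE : forall k, absv (V *m d) k 0 = (V *m d) k 0.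
  by move=> k; rewrite mxE ger0_norm.
have e1E : forall j, (e1 R n) j 0 = (j == ord0)%:R.
  by move=> j; rewrite mxE andbT.
have dj : forall j, d j 0 = (j == ord0)%:R + eps * gam j 0.
  by move=> j; rewrite dE !mxE andbT.
have d0 : forall j, 0 <= d j 0.
  by move=> j; rewrite dj addr_ge0 ?ler0n // mulr_ge0 //; lra.
have esd : esum d = 1 + eps by rewrite dE esum_lin esum_e1 gam_sum mulr1.
set N := (n.+1%:R : R).
have N_gt0 : 0 < N by rewrite ltr0n.
set mu := lambda * esum d / N.
have mu_ge0 : 0 <= mu by rewrite /mu divr_ge0 ?mulr_ge0 ?esd //; lra.
set ones := (const_mx 1 : 'cV[R]_n.+1).
set gc := (1 - lambda) *: d + mu *: ones.
have gcE : forall j, gc j 0 = (1 - lambda) * d j 0 + mu.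
  by move=> j; rewrite /gc [LHS]mxE [((1 - lambda) *: d) j 0]mxE [(mu *: ones) j 0]mxE [ones j 0]mxE mulr1.
have Vones : V *m ones = 0 by rewrite /V -mulmxA (P_ones Hconn _ HP) mulmx0.
have Vgc : forall k, (V *m gc) k 0 = (1 - lambda) * (V *m d) k 0.
  by move=> k; rewrite /gc mulmxDr -!scalemxAr Vones scaler0 addr0 mxE.
have esgc : esum gc = esum d.
  rewrite {1}/esum; under eq_bigr do rewrite gcE.
  rewrite big_split /= -mulr_sumr sumr_const card_ord -/(esum d) /mu.
  rewrite -mulr_natr -/N mulfVK; last by apply: lt0r_neq0.
  ring.
clearbody gc.
have gc0 : forall j, 0 <= gc j 0.
  by move=> j; rewrite gcE addr_ge0 // mulr_ge0 //; lra.
have feas_gc : feasible V lambda d gc.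
  split; [exact: gc0 | exact: esgc | ].
  move=> k; rewrite absE mulBE Vgc.
  have := Vd0 k; set x := (V *m d) k 0 => hx.
  have hlx : 0 <= lambda * x by apply: mulr_ge0 => //; lra.
  split; lra.
have Hob := Hopt gc feas_gc.
have Hsq : \sum_j g j 0 ^+ 2 <= \sum_j gc j 0 ^+ 2.
  by move: Hob; rewrite /objective ler_pM2l // invr_gt0 ltr0n.
set w := fun j => gc j 0 - g j 0.
set W := \sum_j w j ^+ 2.
have W_ge0 : 0 <= W by apply: sumr_ge0 => j _; exact: sqr_ge0.
have Hexp : \sum_j g j 0 ^+ 2 = \sum_j gc j 0 ^+ 2 - 2 * \sum_j gc j 0 * w j + W.
  transitivity (\sum_j (gc j 0 ^+ 2 - 2 * (gc j 0 * w j) + w j ^+ 2)).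
    by apply: eq_bigr => j _; rewrite /w; ring.
  by rewrite big_split sumrB /= -mulr_sumr.
have HW1 : W <= 2 * \sum_j gc j 0 * w j by lra.
have sw0 : \sum_j w j = 0.
  by rewrite /w sumrB -/(esum gc) -/(esum g) esgc Hgs subrr.
have Hgcw : \sum_j gc j 0 * w j = (1 - lambda) * \sum_j d j 0 * w j.
  transitivity (\sum_j ((1 - lambda) * (d j 0 * w j) + mu * w j)).
    by apply: eq_bigr => j _; rewrite gcE; ring.
  by rewrite big_split /= -!mulr_sumr sw0 mulr0 addr0.
have Hdw : \sum_j d j 0 * w j = w ord0 + eps * \sum_j gam j 0 * w j.
  transitivity (\sum_j ((j == ord0)%:R * w j + eps * (gam j 0 * w j))).
    by apply: eq_bigr => j _; rewrite dj; ring.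
  by rewrite big_split /= sum_delta -mulr_sumr.
have gam_le1 : forall j, gam j 0 <= 1.
  by move=> j; rewrite -gam_sum /esum; exact: (@le_sum_one _ _ (fun k => gam k 0) j gam_ge0).

have Hgw : \sum_j gam j 0 * w j <= 1 + eps.
  rewrite -esd -esgc; apply: ler_sum => j _; rewrite /w.
  have := gam_ge0 j; have := gam_le1 j; have := Hg0 j; have := gc0 j.
  move=> h1 h2 h3 h4; nra.
have esy : esum (g - gc) = 0.
  rewrite /esum (eq_bigr (fun j => g j 0 - gc j 0)); last by move=> j _; rewrite !mxE.
  by rewrite sumrB -/(esum g) -/(esum gc) esgc Hgs subrr.
have yE : g - gc = C^T *m (V *m (g - gc)).
  have := LP_formula Hconn _ HP (g - gc); rewrite esy mul0r scale0r subr0 -/C => E.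
  by apply/esym; rewrite /V !mulmxA; exact: E.
have Hterm : forall k, - (2 * eps * `|(V *m gam) k 0|) <=
    ((ord0 == src k)%:R - (ord0 == dst k)%:R) * (V *m (g - gc)) k 0.
  move=> k.
  have hv : (V *m (g - gc)) k 0 = (V *m g) k 0 - (1 - lambda) * (V *m d) k 0.
    by rewrite mulBE Vgc.
  have := Hgb k; rewrite absE mulBE => -[hb1 hb2].
  have hd := Vd0 k.
  have hn := normr_ge0 ((V *m gam) k 0).
  have hepsn : 0 <= 2 * eps * `|(V *m gam) k 0| by rewrite !mulr_ge0 //; lra.
  rewrite hv.
  case: (ord0 =P src k) => [Hs|Hs]; case: (ord0 =P dst k) => [Ht|Ht] /=.
  - rewrite subrr mul0r; lra.
  - rewrite subr0 mul1r; lra.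
  - have hm := maxprin Hconn _ HP k (esym Ht).
    rewrite mulmxA -/V in hm.
    have := Vd_lin k => hvl.
    have hle := ler_norm ((V *m gam) k 0).
    have h1 : (V *m d) k 0 <= eps * `|(V *m gam) k 0|.
      rewrite hvl; have := ler_wpM2l (ltW eps_gt0) hle; lra.
    rewrite sub0r mulN1r; nra.
  - rewrite subrr mul0r; lra.
have Hw0 : w ord0 <= 2 * eps * K1.
  have := congr1 (fun M : 'cV[R]_n.+1 => M ord0 0) yE; rewrite incTE /= => Hy.
  have : \sum_k - (2 * eps * `|(V *m gam) k 0|) <= (g - gc) ord0 0.
    by rewrite Hy; apply: ler_sum => k _; exact: Hterm.
  rewrite sumrN -mulr_sumr -/K1 mxE [(- gc) _ _]mxE /w; lra.
have HWK : W <= eps * K.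
  rewrite Hgcw Hdw in HW1.
  set S := \sum_j gam j 0 * w j in HW1 Hgw.
  rewrite /K.
  have h1 : w ord0 + eps * S <= 2 * eps * K1 + eps * (1 + eps).
    have := ler_wpM2l (ltW eps_gt0) Hgw; lra.
  have h2 : 0 <= 2 * eps * K1 + eps * (1 + eps).
    by rewrite addr_ge0 ?mulr_ge0 //; lra.
  nra.
have Vdi : a / 2 <= (V *m d) i 0.
  rewrite Vd_lin -/a -/cg.
  have hle := ler_normr cg.
  have : eps * (`|cg| + 1) <= a / 2.
    have := eps_lt3; rewrite ltr_pdivlMr; last by rewrite mulr_gt0 //.
    move=> h; apply: ltW; lra.
  have hn := normr_ge0 cg.
  have : - cg <= `|cg| by rewrite -normrN ler_norm.
  nra.
set T := \sum_j V i j * (g j 0 - gc j 0).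
have VgE : (V *m g) i 0 = (1 - lambda) * (V *m d) i 0 + T.
  rewrite -Vgc /T !mxE -big_split /=; apply: eq_bigr => j _; ring.
have HT : 2 * al * T <= al ^+ 2 * U + W.
  have : 0 <= \sum_j ((al * V i j) - (g j 0 - gc j 0)) ^+ 2.
    by apply: sumr_ge0 => j _; exact: sqr_ge0.
  have -> : \sum_j ((al * V i j) - (g j 0 - gc j 0)) ^+ 2 =
     al ^+ 2 * U + W - 2 * al * T.
    rewrite /U /W /T !mulr_sumr -big_split -sumrB /=; apply: eq_bigr => j _.
    rewrite /w; ring.
  lra.
have HepsK : eps * (K + 1) < lambda * a * al.
  by move: eps_lt4; rewrite ltr_pdivlMr //; lra.
have HWlt : W < lambda * a * al by nra.
have HalU : al ^+ 2 * U = al * (lambda * a - al).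
  by rewrite -alE; ring.
have HT2 : T < lambda * a.
  have : 2 * al * T < 2 * al * (lambda * a) by nra.
  by rewrite ltr_pM2l // mulr_gt0.
rewrite VgE; nra.
Qed.
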